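(* Let $(\mathcal{C},d,\eta)$ be a symmetric monoidal anti-involutive category which has duals, and let $(\cdot)^*\colon\mathcal{C}\to\mathcal{C}^{\mathrm{op}}$ be a choice of dual functor. Then the canonical monoidal natural isomorphism $d\circ(\cdot)^*\Rightarrow(\cdot)^*\circ d$ (given by uniqueness of duals) makes $(\cdot)^*$ into an anti-involutive functor $(\mathcal{C},d,\eta)\to(\mathcal{C}^{\mathrm{op}},d,\eta^{-1})$.
   Context: A symmetric monoidal anti-involutive category: a symmetric monoidal category $\mathcal{C}$ with a symmetric monoidal functor $d\colon\mathcal{C}\to\mathcal{C}^{\mathrm{op}}$ and a monoidal natural isomorphism $\eta\colon\mathrm{id}\Rightarrow d^2$ with $d(\eta_x)\circ\eta_{dx}=\mathrm{id}_{dx}$. $\mathcal{C}^{\mathrm{op}}$ carries the anti-involution $d$ with $\eta$ inverted. An anti-involutive functor $(F,\phi)\colon(\mathcal{C}_1,d_1,\eta_1)\to(\mathcal{C}_2,d_2,\eta_2)$ is a functor with a natural isomorphism $\phi\colon F\circ d_1\Rightarrow d_2\circ F$ such that $\phi_{d_1x}\circ F((\eta_1)_x)=d_2(\phi_x)\circ(\eta_2)_{F(x)}$. A dual functor is obtained by choosing for each $x$ a dual $(x^*,\mathrm{ev}_x\colon x^*\otimes x\to1,\mathrm{coev}_x\colon1\to x\otimes x^* )$; $f^*$ is the unique morphism with $\mathrm{ev}_x\circ(f^*\otimes\mathrm{id})=\mathrm{ev}_y\circ(\mathrm{id}\otimes f)$ for $f\colon x\to y$, and the monoidal structure uses the braiding.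 Since the symmetric monoidal functor $d$ carries duality data to duality data, $d(x^* )$ and $(dx)^*$ are both duals of $dx$; the canonical isomorphism between them compatible with evaluations and coevaluations is the uniqueness-of-duals isomorphism. *)

(* Defs.v *)
(* Morphism equality is Leibniz equality. *)

Declare Scope cat_scope.
Open Scope cat_scope.

Record Cat : Type := {
  ob :> Type;
  hom : ob -> ob -> Type;
  idm : forall a : ob, hom a a;
  comp : forall a b c : ob, hom b c -> hom a b -> hom a c;
  comp_idl : forall a b (f : hom a b), comp _ _ _ (idm b) f = f;
  comp_idr : forall a b (f : hom a b), comp _ _ _ f (idm a) = f;
  comp_assoc : forall a b c e (f : hom a b) (g : hom b c) (h : hom c e),
      comp _ _ _ h (comp _ _ _ g f) = comp _ _ _ (comp _ _ _ h g) f
}.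

Arguments hom {_} _ _.
Arguments idm {_} _.
Arguments comp {_ _ _ _} _ _.

Notation "g ∘ f" := (comp g f) (at level 40, left associativity) : cat_scope.

Class SMC (C : Cat) := {
  tens : C -> C -> C;
  tensm : forall {a b c e : C}, hom a b -> hom c e -> hom (tens a c) (tens b e);
  tensm_id : forall a b : C, tensm (idm a) (idm b) = idm (tens a b);
  tensm_comp : forall (a b c a' b' c' : C) (f : hom a b) (g : hom b c)
      (f' : hom a' b') (g' : hom b' c'),
      tensm (g ∘ f) (g' ∘ f') = tensm g g' ∘ tensm f f';
  unit : C;
  assoc : forall a b c : C, hom (tens (tens a b) c) (tens a (tens b c));
  assoc_inv : forall a b c : C, hom (tens a (tens b c)) (tens (tens a b) c);
  assoc_invl : forall a b c : C, assoc_inv a b c ∘ assoc a b c = idm _;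
  assoc_invr : forall a b c : C, assoc a b c ∘ assoc_inv a b c = idm _;
  assoc_nat : forall (a a' b b' c c' : C) (f : hom a a') (g : hom b b') (h : hom c c'),
      assoc a' b' c' ∘ tensm (tensm f g) h = tensm f (tensm g h) ∘ assoc a b c;
  lunit : forall a : C, hom (tens unit a) a;
  lunit_inv : forall a : C, hom a (tens unit a);
  lunit_invl : forall a : C, lunit_inv a ∘ lunit a = idm _;
  lunit_invr : forall a : C, lunit a ∘ lunit_inv a = idm _;
  lunit_nat : forall (a b : C) (f : hom a b), lunit b ∘ tensm (idm unit) f = f ∘ lunit a;
  runit : forall a : C, hom (tens a unit) a;
  runit_inv : forall a : C, hom a (tens a unit);
  runit_invl : forall a : C, runit_inv a ∘ runit a = idm _;
  runit_invr : forall a : C, runit a ∘ runit_inv a = idm _;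
  runit_nat : forall (a b : C) (f : hom a b), runit b ∘ tensm f (idm unit) = f ∘ runit a;
  pentagon : forall a b c e : C,
      assoc a b (tens c e) ∘ assoc (tens a b) c e
      = tensm (idm a) (assoc b c e) ∘ assoc a (tens b c) e ∘ tensm (assoc a b c) (idm e);
  triangle : forall a b : C,
      tensm (idm a) (lunit b) ∘ assoc a unit b = tensm (runit a) (idm b);
  braid : forall a b : C, hom (tens a b) (tens b a);
  braid_nat : forall (a a' b b' : C) (f : hom a a') (g : hom b b'),
      braid a' b' ∘ tensm f g = tensm g f ∘ braid a b;
  braid_sym : forall a b : C, braid b a ∘ braid a b = idm (tens a b);
  hexagon : forall a b c : C,
      assoc b c a ∘ braid a (tens b c) ∘ assoc a b c
      = tensm (idm b) (braid a c) ∘ assoc b a c ∘ tensm (braid a b) (idm c)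
}.

Arguments tensm {_ _ _ _ _ _} _ _.

Notation "a ⊗ b" := (tens a b) (at level 35, right associativity) : cat_scope.
Notation "f ⊠ g" := (tensm f g) (at level 35, right associativity) : cat_scope.

(* A symmetric monoidal anti-involution (d, eta) on (C, ⊗).
   d is a functor C -> C^op: on morphisms dm f : d b -> d a for f : a -> b.
   Its strong symmetric monoidal structure, as a functor into C^op
   (whose associator/unitors/braiding are the inverses of those of C),
   is given by C-isomorphisms  mu a b : d (a ⊗ b) -> d a ⊗ d b  (the C^op
   morphism d a ⊗ d b -> d (a ⊗ b)) and  eps : d 1 -> 1  (the C^op morphism
   1 -> d 1).  All monoidal-functor axioms below are the C^op axioms
   written out in C.  eta : id => d^2 is a monoidal natural isomorphism,
   where d^2 = d^op ∘ d carries the composite monoidal structure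
   mu2 x y = dm (mu x y) ∘ mu_inv (d x) (d y) : d d x ⊗ d d y -> d d (x ⊗ y),
   eps2    = dm eps ∘ eps_inv                 : 1 -> d d 1. *)
Class AntiInv (C : Cat) (S : SMC C) := {
  d : C -> C;
  dm : forall {a b : C}, hom a b -> hom (d b) (d a);
  dm_id : forall a : C, dm (idm a) = idm (d a);
  dm_comp : forall (a b c : C) (f : hom a b) (g : hom b c), dm (g ∘ f) = dm f ∘ dm g;
  mu : forall a b : C, hom (d (a ⊗ b)) (d a ⊗ d b);
  mu_inv : forall a b : C, hom (d a ⊗ d b) (d (a ⊗ b));
  mu_invl : forall a b : C, mu_inv a b ∘ mu a b = idm _;
  mu_invr : forall a b : C, mu a b ∘ mu_inv a b = idm _;
  mu_nat : forall (a a' b b' : C) (f : hom a a') (g : hom b b'),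
      mu a b ∘ dm (f ⊠ g) = (dm f ⊠ dm g) ∘ mu a' b';
  eps : hom (d unit) unit;
  eps_inv : hom unit (d unit);
  eps_invl : eps_inv ∘ eps = idm _;
  eps_invr : eps ∘ eps_inv = idm _;
  mu_assoc : forall a b c : C,
      assoc_inv (d a) (d b) (d c) ∘ (idm (d a) ⊠ mu b c) ∘ mu a (b ⊗ c)
      = (mu a b ⊠ idm (d c)) ∘ mu (a ⊗ b) c ∘ dm (assoc a b c);
  mu_lunit : forall a : C,
      (eps ⊠ idm (d a)) ∘ mu unit a ∘ dm (lunit a) = lunit_inv (d a);
  mu_runit : forall a : C,
      (idm (d a) ⊠ eps) ∘ mu a unit ∘ dm (runit a) = runit_inv (d a);
  mu_braid : forall a b : C,
      mu a b ∘ dm (braid a b) = braid (d b) (d a) ∘ mu b a;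
  eta : forall a : C, hom a (d (d a));
  eta_inv : forall a : C, hom (d (d a)) a;
  eta_invl : forall a : C, eta_inv a ∘ eta a = idm a;
  eta_invr : forall a : C, eta a ∘ eta_inv a = idm _;
  eta_nat : forall (a b : C) (f : hom a b), eta b ∘ f = dm (dm f) ∘ eta a;
  eta_mon_tens : forall a b : C,
      eta (a ⊗ b) = dm (mu a b) ∘ mu_inv (d a) (d b) ∘ (eta a ⊠ eta b);
  eta_mon_unit : eta unit = dm eps ∘ eps_inv;
  eta_invol : forall a : C, dm (eta a) ∘ eta (d a) = idm (d a)
}.

Arguments dm {_ _ _ _ _} _.

Definition is_dual {C : Cat} {S : SMC C} (x xs : C)
    (ev : hom (xs ⊗ x) unit) (coev : hom unit (x ⊗ xs)) : Prop :=
  runit x ∘ (idm x ⊠ ev) ∘ assoc x xs x ∘ (coev ⊠ idm x) ∘ lunit_inv x = idm x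
  /\ lunit xs ∘ (ev ⊠ idm xs) ∘ assoc_inv xs x xs ∘ (idm xs ⊠ coev) ∘ runit_inv xs
     = idm xs.

(* The duality data transported along the anti-involution d:
   d (x^* ) is a dual of d x with evaluation and coevaluation obtained by
   applying d to coev_x and ev_x, the monoidal structure of d, and the braiding. *)
Definition d_ev {C : Cat} {S : SMC C} {A : AntiInv C S} (x xs : C)
    (coev : hom unit (x ⊗ xs)) : hom (d xs ⊗ d x) unit :=
  eps ∘ dm coev ∘ mu_inv x xs ∘ braid (d xs) (d x).

Definition d_coev {C : Cat} {S : SMC C} {A : AntiInv C S} (x xs : C)
    (ev : hom (xs ⊗ x) unit) : hom unit (d x ⊗ d xs) :=
  braid (d xs) (d x) ∘ mu xs x ∘ dm ev ∘ eps_inv.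

(* Main.v *)
Require Import Defs.

Lemma idl {C : Cat} {a b : C} (f : hom a b) : idm b ∘ f = f. Proof. apply comp_idl. Qed.
Lemma idr {C : Cat} {a b : C} (f : hom a b) : f ∘ idm a = f. Proof. apply comp_idr. Qed.
Lemma cA {C : Cat} {a b c e : C} (f : hom a b) (g : hom b c) (h : hom c e) : h ∘ (g ∘ f) = h ∘ g ∘ f.
Proof. apply comp_assoc. Qed.

Lemma ctx2 {C : Cat} {a b c : C} {p : hom b c} {q : hom a b} {r : hom a c}
  (E : p ∘ q = r) {z} (X : hom c z) : X ∘ p ∘ q = X ∘ r.
Proof. rewrite <- cA, E; reflexivity. Qed.
Lemma ctx3 {C : Cat} {a b c e : C} {p : hom c e} {q : hom b c} {s : hom a b} {r : hom a e}
  (E : p ∘ q ∘ s = r) {z} (X : hom e z) : X ∘ p ∘ q ∘ s = X ∘ r.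
Proof. rewrite <- E, !cA; reflexivity. Qed.
Lemma ctx4 {C : Cat} {a b c e f : C} {p : hom e f} {q : hom c e} {s : hom b c} {t : hom a b} {r : hom a f}
  (E : p ∘ q ∘ s ∘ t = r) {z} (X : hom f z) : X ∘ p ∘ q ∘ s ∘ t = X ∘ r.
Proof. rewrite <- E, !cA; reflexivity. Qed.
Lemma ctx5 {C : Cat} {a b c e f g : C} {o : hom f g} {p : hom e f} {q : hom c e} {s : hom b c} {t : hom a b} {r : hom a g}
  (E : o ∘ p ∘ q ∘ s ∘ t = r) {z} (X : hom g z) : X ∘ o ∘ p ∘ q ∘ s ∘ t = X ∘ r.
Proof. rewrite <- E, !cA; reflexivity. Qed.

Ltac nrm := rewrite ?cA, ?idl, ?idr.
Ltac srw0 E := first [ rewrite (ctx5 E) | rewrite (ctx4 E) | rewrite (ctx3 E) | rewrite (ctx2 E) | rewrite E ].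
Ltac srw E := first [ (let F := open_constr:(E) in srw0 F)
  | (let F := open_constr:(E _) in srw0 F)
  | (let F := open_constr:(E _ _) in srw0 F)
  | (let F := open_constr:(E _ _ _) in srw0 F)
  | (let F := open_constr:(E _ _ _ _) in srw0 F)
  | (let F := open_constr:(E _ _ _ _ _) in srw0 F)
  | (let F := open_constr:(E _ _ _ _ _ _) in srw0 F)
  | (let F := open_constr:(E _ _ _ _ _ _ _) in srw0 F)
  | (let F := open_constr:(E _ _ _ _ _ _ _ _) in srw0 F)
  | (let F := open_constr:(E _ _ _ _ _ _ _ _ _) in srw0 F)
  | (let F := open_constr:(E _ _ _ _ _ _ _ _ _ _) in srw0 F)
  | (let F := open_constr:(E _ _ _ _ _ _ _ _ _ _ _) in srw0 F)
  | (let F := open_constr:(E _ _ _ _ _ _ _ _ _ _ _ _) in srw0 F) ]; nrm.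
Ltac srwb E := first [ (let F := open_constr:(eq_sym E) in srw0 F)
  | (let F := open_constr:(eq_sym (E _)) in srw0 F)
  | (let F := open_constr:(eq_sym (E _ _)) in srw0 F)
  | (let F := open_constr:(eq_sym (E _ _ _)) in srw0 F)
  | (let F := open_constr:(eq_sym (E _ _ _ _)) in srw0 F)
  | (let F := open_constr:(eq_sym (E _ _ _ _ _)) in srw0 F)
  | (let F := open_constr:(eq_sym (E _ _ _ _ _ _)) in srw0 F)
  | (let F := open_constr:(eq_sym (E _ _ _ _ _ _ _)) in srw0 F)
  | (let F := open_constr:(eq_sym (E _ _ _ _ _ _ _ _)) in srw0 F)
  | (let F := open_constr:(eq_sym (E _ _ _ _ _ _ _ _ _)) in srw0 F)
  | (let F := open_constr:(eq_sym (E _ _ _ _ _ _ _ _ _ _)) in srw0 F)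
  | (let F := open_constr:(eq_sym (E _ _ _ _ _ _ _ _ _ _ _)) in srw0 F)
  | (let F := open_constr:(eq_sym (E _ _ _ _ _ _ _ _ _ _ _ _)) in srw0 F) ]; nrm.

Ltac sh := match goal with |- ?G => idtac G end.

Ltac hideR := match goal with |- _ = ?R => let RR := fresh "RR" in let H := fresh "HRR" in remember R as RR eqn:H end.
Ltac fin := match goal with H : ?RR = _ |- _ => subst RR end; nrm; reflexivity.

Section Basics.
Context {C : Cat} {S : SMC C}.

Lemma tl {a b c e : C} (g : hom b c) (f : hom a b) : (g ∘ f) ⊠ idm e = (g ⊠ idm e) ∘ (f ⊠ idm e).
Proof. rewrite <- tensm_comp, idl; reflexivity. Qed.
Lemma tr {a b c e : C} (g : hom b c) (f : hom a b) : idm e ⊠ (g ∘ f) = (idm e ⊠ g) ∘ (idm e ⊠ f).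
Proof. rewrite <- tensm_comp, idl; reflexivity. Qed.
Lemma x1 {a b c e : C} (f : hom a b) (g : hom c e) : (f ⊠ idm e) ∘ (idm a ⊠ g) = f ⊠ g.
Proof. rewrite <- tensm_comp, idl, idr; reflexivity. Qed.
Lemma x2 {a b c e : C} (f : hom a b) (g : hom c e) : (idm b ⊠ g) ∘ (f ⊠ idm c) = f ⊠ g.
Proof. rewrite <- tensm_comp, idl, idr; reflexivity. Qed.
Lemma x1' {a b c e : C} (f : hom a b) (g : hom c e) : f ⊠ g = (f ⊠ idm e) ∘ (idm a ⊠ g).
Proof. symmetry; apply x1. Qed.
Lemma x2' {a b c e : C} (f : hom a b) (g : hom c e) : f ⊠ g = (idm b ⊠ g) ∘ (f ⊠ idm c).
Proof. symmetry; apply x2. Qed.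
Lemma tid (a b : C) : idm a ⊠ idm b = idm (a ⊗ b).
Proof. apply tensm_id. Qed.

Lemma ainv_nat (a a' b b' c c' : C) (f : hom a a') (g : hom b b') (h : hom c c') :
  assoc_inv a' b' c' ∘ (f ⊠ (g ⊠ h)) = ((f ⊠ g) ⊠ h) ∘ assoc_inv a b c.
Proof.
  rewrite <- (idr (assoc_inv a' b' c' ∘ _)), <- (assoc_invr a b c).
  rewrite !cA, <- (cA _ _ (assoc_inv a' b' c')), <- assoc_nat.
  rewrite !cA, assoc_invl, idl; reflexivity.
Qed.
Lemma linv_nat (a b : C) (f : hom a b) : lunit_inv b ∘ f = (idm unit ⊠ f) ∘ lunit_inv a.
Proof.
  rewrite <- (idr (lunit_inv b ∘ f)), <- (lunit_invr a), !cA.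
  rewrite <- (cA _ _ (lunit_inv b)), <- lunit_nat, !cA, lunit_invl, idl; reflexivity.
Qed.
Lemma rinv_nat (a b : C) (f : hom a b) : runit_inv b ∘ f = (f ⊠ idm unit) ∘ runit_inv a.
Proof.
  rewrite <- (idr (runit_inv b ∘ f)), <- (runit_invr a), !cA.
  rewrite <- (cA _ _ (runit_inv b)), <- runit_nat, !cA, runit_invl, idl; reflexivity.
Qed.

Lemma lfaith (a b : C) (f g : hom a b) : idm unit ⊠ f = idm unit ⊠ g -> f = g.
Proof.
  intro H.
  rewrite <- (idr f), <- (lunit_invr a), cA, <- lunit_nat, H, lunit_nat.
  rewrite <- cA, lunit_invr, idr; reflexivity.
Qed.
Lemma rfaith (a b : C) (f g : hom a b) : f ⊠ idm unit = g ⊠ idm unit -> f = g.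
Proof.
  intro H.
  rewrite <- (idr f), <- (runit_invr a), cA, <- runit_nat, H, runit_nat.
  rewrite <- cA, runit_invr, idr; reflexivity.
Qed.

Lemma rcan {a b c : C} (f g : hom b c) (p : hom a b) (q : hom b a) :
  p ∘ q = idm b -> f ∘ p = g ∘ p -> f = g.
Proof. intros H1 H2. rewrite <- (idr f), <- (idr g), <- H1, !cA, H2; reflexivity. Qed.
Lemma lcan {a b c : C} (f g : hom a b) (p : hom b c) (q : hom c b) :
  q ∘ p = idm b -> p ∘ f = p ∘ g -> f = g.
Proof. intros H1 H2. rewrite <- (idl f), <- (idl g), <- H1, <- !cA, H2; reflexivity. Qed.

Lemma K1 (a b : C) : lunit (a ⊗ b) ∘ assoc unit a b = lunit a ⊠ idm b.
Proof.
  apply lfaith.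
  apply (rcan _ _ (assoc unit (unit ⊗ a) b ∘ (assoc unit unit a ⊠ idm b))
               ((assoc_inv unit unit a ⊠ idm b) ∘ assoc_inv unit (unit ⊗ a) b)).
  { nrm. rewrite (ctx2 (eq_sym (@tl _ _ _ _ _ _))). rewrite assoc_invr, tid, idr, assoc_invr; reflexivity. }
  rewrite tr. nrm.
  srwb (pentagon unit unit a b).
  srw (triangle unit (a ⊗ b)).
  rewrite <- (tid a b). srwb (assoc_nat (unit ⊗ unit) unit a a b b (runit unit) (idm a) (idm b)).
  rewrite <- (triangle unit a), tl. nrm.
  srw (assoc_nat unit unit (unit ⊗ a) a b b (idm unit) (lunit a) (idm b)).
  reflexivity.
Qed.

Lemma lam11 : lunit (unit ⊗ unit) = idm unit ⊠ lunit unit.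
Proof.
  apply (lcan _ _ (lunit unit) (lunit_inv unit)); [apply lunit_invl|].
  rewrite lunit_nat; reflexivity.
Qed.

Lemma K3 : lunit unit = runit unit.
Proof.
  apply rfaith. rewrite <- triangle, <- K1, lam11; reflexivity.
Qed.

Lemma K2 (a b : C) : (idm a ⊠ runit b) ∘ assoc a b unit = runit (a ⊗ b).
Proof.
  apply rfaith. symmetry.
  rewrite <- (triangle (a ⊗ b) unit), <- (tid a b).
  apply (lcan _ _ (assoc a b unit) (assoc_inv a b unit)); [apply assoc_invl|].
  nrm. srw assoc_nat. srw pentagon. srwb @tr. rewrite triangle.
  srwb assoc_nat. rewrite tl; nrm. reflexivity.
Qed.

Lemma H2 (a b c : C) :
  assoc_inv a b c ∘ braid (b ⊗ c) a ∘ assoc_inv b c a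
  = (braid b a ⊠ idm c) ∘ assoc_inv b a c ∘ (idm b ⊠ braid c a).
Proof.
  apply (rcan _ _ ((idm b ⊠ braid a c) ∘ assoc b a c ∘ (braid a b ⊠ idm c))
                  ((braid b a ⊠ idm c) ∘ assoc_inv b a c ∘ (idm b ⊠ braid c a))).
  { nrm. srwb @tl. rewrite braid_sym, tid, idr. srw assoc_invr. srwb @tr. rewrite braid_sym, tid; reflexivity. }
  hideR. srwb hexagon. srw assoc_invl. srw braid_sym. rewrite assoc_invl.
  subst. nrm. srwb @tr. rewrite braid_sym, tid. nrm. srw assoc_invl. rewrite <- tl, braid_sym, tid; reflexivity.
Qed.

Lemma UB (a : C) : lunit a ∘ braid a unit = runit a.
Proof.
  apply rfaith. apply (lcan _ _ (braid a unit) (braid unit a)); [apply braid_sym|].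
  symmetry. rewrite <- (triangle a unit). hideR.
  nrm. srw braid_nat. srwb K1. srw hexagon. srw lunit_nat. srw K1. srwb @tl.
  fin.
Qed.

Lemma UB2 (a : C) : runit a ∘ braid unit a = lunit a.
Proof. rewrite <- UB. nrm. srw braid_sym. reflexivity. Qed.
Lemma UBi (a : C) : braid a unit ∘ runit_inv a = lunit_inv a.
Proof.
  apply (lcan _ _ (lunit a) (lunit_inv a)); [apply lunit_invl|].
  nrm. rewrite UB, runit_invr, lunit_invr; reflexivity.
Qed.
Lemma UBi2 (a : C) : braid unit a ∘ lunit_inv a = runit_inv a.
Proof.
  apply (lcan _ _ (runit a) (runit_inv a)); [apply runit_invl|].
  nrm. rewrite UB2, runit_invr, lunit_invr; reflexivity.
Qed.

Lemma H2' (a b c : C) :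
  assoc_inv a b c ∘ braid (b ⊗ c) a
  = (braid b a ⊠ idm c) ∘ assoc_inv b a c ∘ (idm b ⊠ braid c a) ∘ assoc b c a.
Proof.
  apply (rcan _ _ (assoc_inv b c a) (assoc b c a)); [apply assoc_invl|].
  rewrite H2. nrm. srw assoc_invr. reflexivity.
Qed.
Lemma hex' (a b c : C) :
  braid a (b ⊗ c) ∘ assoc a b c
  = assoc_inv b c a ∘ (idm b ⊠ braid a c) ∘ assoc b a c ∘ (braid a b ⊠ idm c).
Proof.
  apply (lcan _ _ (assoc b c a) (assoc_inv b c a)); [apply assoc_invl|].
  nrm. rewrite hexagon, assoc_invr; nrm; reflexivity.
Qed.

Lemma BL (A B : C) :
  assoc_inv A B B ∘ braid (B ⊗ B) A ∘ assoc_inv B B A ∘ braid (B ⊗ A) B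
  = braid B (A ⊗ B) ∘ assoc B A B.
Proof.
  rewrite hex'. hideR.
  srw H2. srwb braid_nat. srw H2'. srwb @tl. rewrite braid_sym, tid. fin.
Qed.

Lemma G5 (A B : C) (e : hom (A ⊗ B) unit) (c : hom unit (B ⊗ A)) :
  lunit B ∘ ((e ∘ braid B A) ⊠ idm B) ∘ assoc_inv B A B ∘ (idm B ⊠ (braid B A ∘ c)) ∘ runit_inv B
  = runit B ∘ (idm B ⊠ e) ∘ assoc B A B ∘ (c ⊠ idm B) ∘ lunit_inv B.
Proof.
  rewrite tl, tr. nrm. srwb H2. rewrite <- UBi2. nrm. srwb (braid_nat unit (B ⊗ A) B B c (idm B)).
  rewrite <- UB. nrm. srw (braid_nat B B (A ⊗ B) unit (idm B) e). srwb BL. reflexivity.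
Qed.

Lemma K1i (a b : C) : lunit_inv a ⊠ idm b = assoc_inv unit a b ∘ lunit_inv (a ⊗ b).
Proof.
  apply (lcan _ _ (lunit a ⊠ idm b) (lunit_inv a ⊠ idm b)).
  { rewrite <- tl, lunit_invl, tid; reflexivity. }
  rewrite <- tl, lunit_invr, tid, <- K1. nrm. srw assoc_invr. rewrite lunit_invr; reflexivity.
Qed.
Lemma K3i : lunit_inv unit = runit_inv unit.
Proof.
  apply (lcan _ _ (lunit unit) (lunit_inv unit)); [apply lunit_invl|].
  rewrite lunit_invr, K3, runit_invr; reflexivity.
Qed.
Lemma triI (a b : C) : (runit a ⊠ idm b) ∘ assoc_inv a unit b = idm a ⊠ lunit b.
Proof.
  rewrite <- triangle. nrm. srw assoc_invr. reflexivity.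
Qed.
Lemma K2i (a b : C) : assoc a b unit ∘ runit_inv (a ⊗ b) = idm a ⊠ runit_inv b.
Proof.
  apply (lcan _ _ (idm a ⊠ runit b) (idm a ⊠ runit_inv b)).
  { rewrite <- tr, runit_invl, tid; reflexivity. }
  rewrite <- tr, runit_invr, tid. nrm. rewrite K2, runit_invr; reflexivity.
Qed.
Lemma Pi (a b c e : C) :
  (assoc a b c ⊠ idm e) ∘ assoc_inv (a ⊗ b) c e
  = assoc_inv a (b ⊗ c) e ∘ (idm a ⊠ assoc_inv b c e) ∘ assoc a b (c ⊗ e).
Proof.
  apply (lcan _ _ (assoc a (b ⊗ c) e) (assoc_inv a (b ⊗ c) e)); [apply assoc_invl|].
  apply (lcan _ _ (idm a ⊠ assoc b c e) (idm a ⊠ assoc_inv b c e)).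
  { rewrite <- tr, assoc_invl, tid; reflexivity. }
  nrm. srw assoc_invr. srwb @tr. rewrite assoc_invr, tid, idl.
  apply (rcan _ _ (assoc (a ⊗ b) c e) (assoc_inv (a ⊗ b) c e)); [apply assoc_invr|].
  nrm. srw assoc_invl. rewrite pentagon; reflexivity.
Qed.

Definition transp {x X Y : C} (e : hom (X ⊗ x) unit) (c : hom unit (x ⊗ X)) (k : hom (Y ⊗ x) unit) : hom Y X :=
  lunit X ∘ (k ⊠ idm X) ∘ assoc_inv Y x X ∘ (idm Y ⊠ c) ∘ runit_inv Y.

Lemma transp_eq (x X Y : C) e c (g : hom Y X) : is_dual x X e c -> g = transp e c (e ∘ (g ⊠ idm x)).
Proof.
  intros [_ Z2]. unfold transp. rewrite tl. nrm.
  srwb ainv_nat. rewrite tid. srw @x1. rewrite (x2' g c). nrm.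
  srwb rinv_nat. rewrite Z2, idl; reflexivity.
Qed.
Lemma L1 (x X Y : C) e c (g h : hom Y X) : is_dual x X e c ->
  e ∘ (g ⊠ idm x) = e ∘ (h ⊠ idm x) -> g = h.
Proof.
  intros D E. rewrite (transp_eq x X Y e c g D), (transp_eq x X Y e c h D), E; reflexivity.
Qed.

Definition Phi {x s y : C} (ev : hom (s ⊗ x) unit) (h : hom unit (y ⊗ s)) : hom x y :=
  runit y ∘ (idm y ⊠ ev) ∘ assoc y s x ∘ (h ⊠ idm x) ∘ lunit_inv x.

Lemma PI (x s y : C) ev coev (h : hom unit (y ⊗ s)) : is_dual x s ev coev ->
  (Phi ev h ⊠ idm s) ∘ coev = h.
Proof.
  intros [_ Z2]. unfold Phi. rewrite !tl. nrm.
  rewrite K1i. nrm. srw linv_nat. rewrite K3i.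
  srwb ainv_nat. rewrite tid. srw @x1. rewrite (x2' h coev). nrm. srwb rinv_nat.
  srw Pi. srwb ainv_nat. srw triI. rewrite <- (tid y s). srw assoc_nat. srw K2i.
  srwb @tr. srwb @tr. srwb @tr. srwb @tr. rewrite Z2, tid, idl; reflexivity.
Qed.
End Basics.

Section Anti.
Context {C : Cat} {S : SMC C} {A : AntiInv C S}.

Lemma miN (a a' b b' : C) (f : hom a a') (g : hom b b') :
  mu_inv a b ∘ (dm f ⊠ dm g) = dm (f ⊠ g) ∘ mu_inv a' b'.
Proof.
  apply (lcan _ _ (mu a b) (mu_inv a b)); [apply mu_invl|].
  nrm. rewrite mu_invr, idl, mu_nat. srw mu_invr. reflexivity.
Qed.
Lemma mnr (a b b' : C) (g : hom b b') :
  (idm (d a) ⊠ dm g) ∘ mu a b' = mu a b ∘ dm (idm a ⊠ g).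
Proof. rewrite mu_nat, dm_id; reflexivity. Qed.
Lemma mnl (a a' b : C) (f : hom a a') :
  (dm f ⊠ idm (d b)) ∘ mu a' b = mu a b ∘ dm (f ⊠ idm b).
Proof. rewrite mu_nat, dm_id; reflexivity. Qed.
Lemma minr (a b b' : C) (g : hom b b') :
  mu_inv a b ∘ (idm (d a) ⊠ dm g) = dm (idm a ⊠ g) ∘ mu_inv a b'.
Proof. rewrite <- miN, dm_id; reflexivity. Qed.
Lemma minl (a a' b : C) (f : hom a a') :
  mu_inv a b ∘ (dm f ⊠ idm (d b)) = dm (f ⊠ idm b) ∘ mu_inv a' b.
Proof. rewrite <- miN, dm_id; reflexivity. Qed.

Lemma T1 (s : C) : mu_inv unit s ∘ (eps_inv ⊠ idm (d s)) ∘ lunit_inv (d s) = dm (lunit s).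
Proof.
  rewrite <- mu_lunit. nrm. srwb @tl. rewrite eps_invl, tid, idr. srw mu_invl. reflexivity.
Qed.
Lemma T2 (s : C) : runit (d s) ∘ (idm (d s) ⊠ eps) ∘ mu s unit = dm (runit_inv s).
Proof.
  apply (rcan _ _ (dm (runit s)) (dm (runit_inv s))).
  { rewrite <- dm_comp, runit_invl, dm_id; reflexivity. }
  rewrite <- dm_comp, runit_invr, dm_id. nrm. srw mu_runit. rewrite runit_invr; reflexivity.
Qed.
Lemma T4 (a b c : C) :
  (idm (d a) ⊠ mu_inv b c) ∘ assoc (d a) (d b) (d c) ∘ (mu a b ⊠ idm (d c))
  = mu a (b ⊗ c) ∘ dm (assoc_inv a b c) ∘ mu_inv (a ⊗ b) c.
Proof.
  apply (lcan _ _ (assoc_inv (d a) (d b) (d c) ∘ (idm (d a) ⊠ mu b c))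
                  ((idm (d a) ⊠ mu_inv b c) ∘ assoc (d a) (d b) (d c))).
  { nrm. srw assoc_invr. rewrite <- tr, mu_invl, tid; reflexivity. }
  nrm. srw mu_assoc. srwb dm_comp. rewrite assoc_invl, dm_id, idr. srw mu_invr.
  srwb @tr. rewrite mu_invr, tid, idr. srw assoc_invl. reflexivity.
Qed.

Lemma dzig2 (x s : C) (ev : hom (s ⊗ x) unit) (coev : hom unit (x ⊗ s)) :
  is_dual x s ev coev ->
  lunit (d s) ∘ (d_ev x s coev ⊠ idm (d s)) ∘ assoc_inv (d s) (d x) (d s)
    ∘ (idm (d s) ⊠ d_coev x s ev) ∘ runit_inv (d s) = idm (d s).
Proof.
  intros [_ Z2].
  assert (G := G5 (d x) (d s) (eps ∘ dm coev ∘ mu_inv x s) (mu s x ∘ dm ev ∘ eps_inv)).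
  unfold d_ev, d_coev. rewrite !cA in G. nrm. rewrite G. clear G.
  rewrite tr, tl, tr, tl. nrm.
  srw T4. srw mnr. srw minl. rewrite T2. srw T1.
  rewrite <- !dm_comp. nrm. rewrite Z2, dm_id; reflexivity.
Qed.

Lemma mbi (a b : C) : dm (braid a b) ∘ mu_inv b a = mu_inv a b ∘ braid (d b) (d a).
Proof.
  apply (lcan _ _ (mu a b) (mu_inv a b)); [apply mu_invl|].
  nrm. rewrite mu_braid, mu_invr, idl. srw mu_invr. reflexivity.
Qed.
Lemma EM (a b : C) : dm (mu a b) ∘ mu_inv (d a) (d b) = eta (a ⊗ b) ∘ (eta_inv a ⊠ eta_inv b).
Proof.
  rewrite eta_mon_tens. nrm. srwb tensm_comp. rewrite !eta_invr, tid, idr; reflexivity.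
Qed.
End Anti.

Lemma mate {C : Cat} {S : SMC C} (star : C -> C)
  (ev : forall x : C, hom (star x ⊗ x) unit)
  (coev : forall x : C, hom unit (x ⊗ star x))
  (Hdual : forall x : C, is_dual x (star x) (ev x) (coev x))
  (starm : forall x y : C, hom x y -> hom (star y) (star x))
  (Hstarm : forall (x y : C) (f : hom x y),
      ev x ∘ (starm x y f ⊠ idm x) = ev y ∘ (idm (star y) ⊠ f))
  (x y : C) (f : hom x y) :
  (idm y ⊠ starm x y f) ∘ coev y = (f ⊠ idm (star x)) ∘ coev x.
Proof.
  rewrite <- (PI x (star x) y (ev x) (coev x) ((idm y ⊠ starm x y f) ∘ coev y) (Hdual x)).
  rewrite <- (PI x (star x) y (ev x) (coev x) ((f ⊠ idm (star x)) ∘ coev x) (Hdual x)).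
  f_equal. f_equal. unfold Phi.
  destruct (Hdual x) as [Zx _]. destruct (Hdual y) as [Zy _].
  rewrite !tl. nrm.
  srw assoc_nat. srwb @tr. rewrite Hstarm, tr. nrm.
  srwb assoc_nat. rewrite tid. srw @x2. rewrite (x1' (coev y) f). nrm. srwb linv_nat.
  srw Zy.
  srw assoc_nat. rewrite tid. srw @x2. rewrite (x1' f (ev x)). nrm. srw runit_nat.
  srw Zx. reflexivity.
Qed.

Theorem mainTheorem11
  (C : Cat) (S : SMC C) (A : AntiInv C S)
  (* a choice of duals for every object: the dual functor on objects *)
  (star : C -> C)
  (ev : forall x : C, hom (star x ⊗ x) unit)
  (coev : forall x : C, hom unit (x ⊗ star x))
  (Hdual : forall x : C, is_dual x (star x) (ev x) (coev x))
  (* the dual functor on morphisms: f^* is the unique morphism with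
     ev_x ∘ (f^* ⊗ id) = ev_y ∘ (id ⊗ f) *)
  (starm : forall x y : C, hom x y -> hom (star y) (star x))
  (Hstarm : forall (x y : C) (f : hom x y),
      ev x ∘ (starm x y f ⊠ idm x) = ev y ∘ (idm (star y) ⊠ f))
  (* psi x : d (x^* ) -> (d x)^*  is the uniqueness-of-duals isomorphism
     between the two duals d (x^* ) and (d x)^* of d x, i.e. the one
     compatible with the evaluations and coevaluations *)
  (psi : forall x : C, hom (d (star x)) (star (d x)))
  (Hpsi_ev : forall x : C,
      ev (d x) ∘ (psi x ⊠ idm (d x)) = d_ev x (star x) (coev x))
  (Hpsi_coev : forall x : C,
      (idm (d x) ⊠ psi x) ∘ d_coev x (star x) (ev x) = coev (d x)) :
  (* psi is a natural isomorphism  d ∘ (.)^* => (.)^* ∘ d ... *)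
  (forall (x y : C) (f : hom x y),
      psi y ∘ dm (starm x y f) = starm (d y) (d x) (dm f) ∘ psi x)
  /\ (forall x : C, exists g : hom (star (d x)) (d (star x)),
        g ∘ psi x = idm _ /\ psi x ∘ g = idm _)
  (* ... satisfying the anti-involutive functor axiom
     phi_{d x} ∘ F(eta_x) = d(phi_x) ∘ eta'_{F x} in C^op, with eta' = eta^{-1},
     written out in C: *)
  /\ (forall x : C,
      starm x (d (d x)) (eta x) ∘ psi (d x) = eta_inv (star x) ∘ dm (psi x)).
Proof.
  split; [|split].
  -
    intros x y f.
    apply (L1 (d y) (star (d y)) _ (ev (d y)) (coev (d y))); [apply Hdual|].
    rewrite !tl. nrm. rewrite Hpsi_ev, Hstarm.
    srw @x2. rewrite (x1' (psi x) (dm f)). nrm. rewrite Hpsi_ev.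
    unfold d_ev. nrm.
    srw braid_nat. srw minr. srwb dm_comp. rewrite (mate star ev coev Hdual starm Hstarm).
    srw braid_nat. srw minl. srwb dm_comp. reflexivity.
  -
    intros x.
    exists (lunit (d (star x)) ∘ (ev (d x) ⊠ idm _) ∘ assoc_inv (star (d x)) (d x) (d (star x))
            ∘ (idm _ ⊠ d_coev x (star x) (ev x)) ∘ runit_inv (star (d x))).
    split.
    + nrm. srw rinv_nat. srw @x2. rewrite (x1' (psi x) (d_coev x (star x) (ev x))). nrm.
      rewrite <- (tid (d x) (d (star x))). srw ainv_nat. srwb @tl. rewrite Hpsi_ev.
      apply dzig2, Hdual.
    + nrm. srwb lunit_nat. srw @x2. rewrite (x1' (ev (d x)) (psi x)). nrm.
      rewrite <- (tid (star (d x)) (d x)). srwb ainv_nat. srwb @tr. rewrite Hpsi_coev.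
      apply Hdual.
  -
    intros x.
    apply (L1 x (star x) _ (ev x) (coev x) _ _ (Hdual x)).
    rewrite !tl. nrm. rewrite Hstarm.
    srw @x2. rewrite (x1' (psi (d x)) (eta x)). nrm. rewrite Hpsi_ev.
    unfold d_ev. rewrite <- (Hpsi_coev x). unfold d_coev. rewrite !dm_comp. nrm.
    srwb minr. srw mbi. srw braid_nat. srw @x2. srw braid_nat. srw braid_sym.
    srw EM. srwb eta_nat. rewrite eta_mon_unit. nrm.
    srwb dm_comp. rewrite eps_invr, dm_id, idr, eps_invr, idl.
    srwb tensm_comp. rewrite eta_invl. srwb @tl. reflexivity.
Qed.
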